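(* For every left-c.e. metric space $\mathcal{M}=(M,d,(p_k)_{k\in\mathbb{N}})$ there exists a left-c.e. ultrametric space $\mathcal{A}$ that has no computable isometric embedding into $\mathcal{M}$. In particular, there is no left-c.e. metric space universal for all left-c.e. metric spaces (without a bound on the diameter) under computable isometric embeddings.
   Context: $\mathcal{M}=(M,d,(p_k))$ is a left-c.e. metric space if it is a Polish metric space with dense sequence of special points $(p_k)$ and $d(p_i,p_k)$ is a left-c.e. real uniformly in $i,k$. An ultrametric space is one satisfying $d(x,z)\le\max(d(x,y),d(y,z))$. A Cauchy name in $\mathcal{M}$ is $g:\mathbb{N}\to\mathbb{N}$ with $d(p_{g(i)},p_{g(k)})\le 2^{-i}$ for $i\le k$. An isometric embedding $f$ of $(A,d_A,(q_k))$ into $\mathcal{M}$ is computable if uniformly in $k$ one can compute a Cauchy name for $f(q_k)$. *)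

(* Defs.v *)
From Stdlib Require Import Reals QArith Qreals Lra Cantor.
Open Scope R_scope.

(* ---------- A model of computation: mu-recursive functions on nat ----------
   All functions are unary; tuples are coded with the Cantor pairing
   Cantor.to_nat / Cantor.of_nat (a bijection nat*nat <-> nat). *)
Inductive rec_code : Type :=
| RZero : rec_code
| RSucc : rec_code
| RId : rec_code
| RFst : rec_code
| RSnd : rec_code
| RPair : rec_code -> rec_code -> rec_code
| RComp : rec_code -> rec_code -> rec_code
| RPrimRec : rec_code -> rec_code -> rec_code
    (* h <x,0> = f x ;  h <x,n+1> = g <x,<n,h <x,n>>> *)
| RMin : rec_code -> rec_code.

Inductive rec_eval : rec_code -> nat -> nat -> Prop :=
| ev_zero x : rec_eval RZero x 0
| ev_succ x : rec_eval RSucc x (S x)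
| ev_id x : rec_eval RId x x
| ev_fst n : rec_eval RFst n (fst (of_nat n))
| ev_snd n : rec_eval RSnd n (snd (of_nat n))
| ev_pair f g x a b :
    rec_eval f x a -> rec_eval g x b -> rec_eval (RPair f g) x (to_nat (a, b))
| ev_comp f g x y z :
    rec_eval g x y -> rec_eval f y z -> rec_eval (RComp f g) x z
| ev_prec0 f g x r :
    rec_eval f x r -> rec_eval (RPrimRec f g) (to_nat (x, 0%nat)) r
| ev_precS f g x n r r' :
    rec_eval (RPrimRec f g) (to_nat (x, n)) r ->
    rec_eval g (to_nat (x, to_nat (n, r))) r' ->
    rec_eval (RPrimRec f g) (to_nat (x, S n)) r'
| ev_min f x n :
    rec_eval f (to_nat (x, n)) 0 ->
    (forall m, (m < n)%nat -> exists v, rec_eval f (to_nat (x, m)) (S v)) ->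
    rec_eval (RMin f) x n.

Definition computable (h : nat -> nat) : Prop :=
  exists c : rec_code, forall x, rec_eval c x (h x).

Definition zdec (a : nat) : Z :=
  let (s, m) := of_nat a in
  match s with O => Z.of_nat m | _ => (- Z.of_nat m)%Z end.

(* n = <a,b> codes the rational zdec(a) / (b+1). Every rational has a code. *)
Definition qdec (n : nat) : Q :=
  let (a, b) := of_nat n in Qmake (zdec a) (Pos.of_succ_nat b).

Definition qR (n : nat) : R := Q2R (qdec n).

Definition is_metric {M : Type} (d : M -> M -> R) : Prop :=
  (forall x y, d x y = 0 <-> x = y) /\
  (forall x y, d x y = d y x) /\
  (forall x y z, d x z <= d x y + d y z).

Definition is_ultrametric {M : Type} (d : M -> M -> R) : Prop :=
  forall x y z, d x z <= Rmax (d x y) (d y z).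

Definition converges_to {M : Type} (d : M -> M -> R) (u : nat -> M) (x : M) : Prop :=
  forall eps, eps > 0 -> exists N, forall n, (n >= N)%nat -> d (u n) x < eps.

Definition cauchy_seq {M : Type} (d : M -> M -> R) (u : nat -> M) : Prop :=
  forall eps, eps > 0 -> exists N, forall n m, (n >= N)%nat -> (m >= N)%nat -> d (u n) (u m) < eps.

Definition complete {M : Type} (d : M -> M -> R) : Prop :=
  forall u : nat -> M, cauchy_seq d u -> exists x, converges_to d u x.

Definition dense_seq {M : Type} (d : M -> M -> R) (p : nat -> M) : Prop :=
  forall x eps, eps > 0 -> exists k, d x (p k) < eps.

Definition polish_metric_space {M : Type} (d : M -> M -> R) (p : nat -> M) : Prop :=
  is_metric d /\ complete d /\ dense_seq d p.

Definition left_ce_uniform {M : Type} (d : M -> M -> R) (p : nat -> M) : Prop :=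
  exists g : nat -> nat, computable g /\
    forall i k,
      (forall s, qR (g (to_nat (i, to_nat (k, s)))) <= qR (g (to_nat (i, to_nat (k, S s))))) /\
      Un_cv (fun s => qR (g (to_nat (i, to_nat (k, s))))) (d (p i) (p k)).

Definition left_ce_metric_space {M : Type} (d : M -> M -> R) (p : nat -> M) : Prop :=
  polish_metric_space d p /\ left_ce_uniform d p.

Definition cauchy_name {M : Type} (d : M -> M -> R) (p : nat -> M) (g : nat -> nat) : Prop :=
  forall i k, (i <= k)%nat -> d (p (g i)) (p (g k)) <= / 2 ^ i.

Definition cauchy_name_for {M : Type} (d : M -> M -> R) (p : nat -> M)
  (g : nat -> nat) (x : M) : Prop :=
  cauchy_name d p g /\ converges_to d (fun i => p (g i)) x.

Definition isometric_embedding {A M : Type} (dA : A -> A -> R) (dM : M -> M -> R)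
  (f : A -> M) : Prop :=
  forall x y, dM (f x) (f y) = dA x y.

Definition computable_map {A M : Type} (q : nat -> A) (dM : M -> M -> R) (p : nat -> M)
  (f : A -> M) : Prop :=
  exists h : nat -> nat, computable h /\
    forall k, cauchy_name_for dM p (fun i => h (to_nat (k, i))) (f (q k)).

(* Main.v *)
Require Import Defs.
From Stdlib Require Import Reals QArith Qreals Cantor.
Open Scope R_scope.
From Stdlib Require Import ZArith Lra Lia Arith PeanoNat Bool Classical ClassicalEpsilon.
Open Scope nat_scope.

Open Scope nat_scope.

Definition p1 (z:nat) : nat := fst (of_nat z).
Definition p2 (z:nat) : nat := snd (of_nat z).

Lemma p1_to a b : p1 (to_nat (a,b)) = a.
Proof. unfold p1; rewrite cancel_of_to; reflexivity. Qed.
Lemma p2_to a b : p2 (to_nat (a,b)) = b.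
Proof. unfold p2; rewrite cancel_of_to; reflexivity. Qed.
Lemma to_p z : to_nat (p1 z, p2 z) = z.
Proof. unfold p1, p2; rewrite <- (surjective_pairing (of_nat z)); apply cancel_to_of. Qed.

Lemma c_ext f g : computable f -> (forall x, f x = g x) -> computable g.
Proof. intros [c H] E; exists c; intro x; rewrite <- E; apply H. Qed.

Lemma c_id : computable (fun x => x).
Proof. exists RId; intro; constructor. Qed.
Lemma c_S : computable S.
Proof. exists RSucc; intro; constructor. Qed.
Lemma c_p1 : computable p1.
Proof. exists RFst; intro; constructor. Qed.
Lemma c_p2 : computable p2.
Proof. exists RSnd; intro; constructor. Qed.
Lemma c_comp f g : computable f -> computable g -> computable (fun x => f (g x)).
Proof. intros [cf Hf] [cg Hg]; exists (RComp cf cg); intro x; econstructor; eauto. Qed.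
Lemma c_pair f g : computable f -> computable g -> computable (fun x => to_nat (f x, g x)).
Proof. intros [cf Hf] [cg Hg]; exists (RPair cf cg); intro x; constructor; eauto. Qed.
Lemma c_const n : computable (fun _ => n).
Proof.
  induction n. exists RZero; intro; constructor.
  apply (c_comp S (fun _ => n)); [apply c_S|exact IHn].
Qed.

Fixpoint PR (f g : nat -> nat) (x n : nat) : nat :=
  match n with 0 => f x | S m => g (to_nat (x, to_nat (m, PR f g x m))) end.

Lemma c_PR f g : computable f -> computable g -> computable (fun z => PR f g (p1 z) (p2 z)).
Proof.
  intros [cf Hf] [cg Hg]; exists (RPrimRec cf cg).
  assert (forall x n, rec_eval (RPrimRec cf cg) (to_nat (x,n)) (PR f g x n)).
  { intros x n; induction n; simpl. constructor; auto. econstructor; eauto. }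
  intro z. rewrite <- (to_p z) at 1. apply H.
Qed.

Lemma c_prec F f g : computable f -> computable g ->
  (forall x, F x 0 = f x) -> (forall x n, F x (S n) = g (to_nat (x, to_nat (n, F x n)))) ->
  computable (fun z => F (p1 z) (p2 z)).
Proof.
  intros cf cg H0 HS. apply (c_ext _ _ (c_PR f g cf cg)).
  intro z. generalize (p1 z) (p2 z). intros x n; induction n; simpl; rewrite ?H0, ?HS, ?IHn; auto.
Qed.

Class C1 (f : nat -> nat) := c1 : computable f.
Class C2 (F : nat -> nat -> nat) := c2 : computable (fun z => F (p1 z) (p2 z)).
Class C3 (F : nat -> nat -> nat -> nat) := c3 : computable (fun z => F (p1 z) (p1 (p2 z)) (p2 (p2 z))).
Class B1 (f : nat -> bool) := b1 : computable (fun z => Nat.b2n (f z)).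
Class B2 (F : nat -> nat -> bool) := b2 : computable (fun z => Nat.b2n (F (p1 z) (p2 z))).

Lemma c_app1 f `{C1 f} a : computable a -> computable (fun x => f (a x)).
Proof. intros; apply c_comp; auto. Qed.
Lemma c_app2 F `{C2 F} a b : computable a -> computable b -> computable (fun x => F (a x) (b x)).
Proof.
  intros ca cb. eapply c_ext. apply (c_comp _ _ H (c_pair _ _ ca cb)).
  intro; cbv beta; rewrite p1_to, p2_to; auto.
Qed.
Lemma c_app3 F `{C3 F} a b c : computable a -> computable b -> computable c ->
  computable (fun x => F (a x) (b x) (c x)).
Proof.
  intros ca cb cc. eapply c_ext. apply (c_comp _ _ H (c_pair _ _ ca (c_pair _ _ cb cc))).
  intro; cbv beta; rewrite ?p1_to, ?p2_to, ?p1_to, ?p2_to; auto.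
Qed.
Lemma c_bapp1 f `{B1 f} a : computable a -> computable (fun x => Nat.b2n (f (a x))).
Proof. intros; apply (c_comp (fun z => Nat.b2n (f z))); auto. Qed.
Lemma c_bapp2 F `{B2 F} a b : computable a -> computable b -> computable (fun x => Nat.b2n (F (a x) (b x))).
Proof.
  intros ca cb. eapply c_ext. apply (c_comp _ _ H (c_pair _ _ ca cb)).
  intro; cbv beta; rewrite p1_to, p2_to; auto.
Qed.

Instance C1_S : C1 S := c_S.
Instance C1_p1 : C1 p1 := c_p1.
Instance C1_p2 : C1 p2 := c_p2.

Lemma c_topair : C2 (fun a b => to_nat (a,b)).
Proof. unfold C2. apply (c_ext (fun z => z)); [apply c_id| intro; rewrite to_p; auto]. Qed.

Definition ifz (c a b : nat) : nat := match c with 0 => b | _ => a end.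
Lemma c_ifz : C3 ifz.
Proof.
  unfold C3.
  set (F := fun (x n : nat) => ifz n (p1 x) (p2 x)).
  assert (computable (fun z => F (p1 z) (p2 z))).
  { apply (c_prec F p2 (fun z => p1 (p1 z))). apply c_p2. apply (c_comp p1 p1); apply c_p1.
    intros; reflexivity. intros; unfold F; cbn [ifz]; rewrite p1_to; reflexivity. }
  eapply c_ext. apply (c_comp _ _ H (c_pair (fun z => to_nat (p1 (p2 z), p2 (p2 z))) p1
     (c_pair _ _ (c_comp _ _ c_p1 c_p2) (c_comp _ _ c_p2 c_p2)) c_p1)).
  intro z; cbv beta; unfold F; rewrite ?p1_to, ?p2_to, ?p1_to, ?p2_to; reflexivity.
Qed.
Instance C3_ifz : C3 ifz := c_ifz.

Lemma c_if (c : nat -> bool) a b : computable (fun x => Nat.b2n (c x)) -> computable a -> computable b ->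
  computable (fun x => if c x then a x else b x).
Proof.
  intros. eapply c_ext. apply (c_app3 ifz _ _ _ H H0 H1).
  intro x; cbv beta; destruct (c x); reflexivity.
Qed.
Lemma c_andb (P Q : nat -> bool) : computable (fun x => Nat.b2n (P x)) -> computable (fun x => Nat.b2n (Q x)) ->
  computable (fun x => Nat.b2n (P x && Q x)).
Proof.
  intros. eapply c_ext. apply (c_if P (fun x => Nat.b2n (Q x)) (fun _ => 0)); auto; apply c_const.
  intro x; cbv beta; destruct (P x); reflexivity.
Qed.
Lemma c_orb (P Q : nat -> bool) : computable (fun x => Nat.b2n (P x)) -> computable (fun x => Nat.b2n (Q x)) ->
  computable (fun x => Nat.b2n (P x || Q x)).
Proof.
  intros. eapply c_ext. apply (c_if P (fun _ => 1) (fun x => Nat.b2n (Q x))); auto; apply c_const.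
  intro x; cbv beta; destruct (P x); reflexivity.
Qed.
Lemma c_negb (P : nat -> bool) : computable (fun x => Nat.b2n (P x)) ->
  computable (fun x => Nat.b2n (negb (P x))).
Proof.
  intros. eapply c_ext. apply (c_if P (fun _ => 0) (fun _ => 1)); auto; apply c_const.
  intro x; cbv beta; destruct (P x); reflexivity.
Qed.
Lemma c_btrue : computable (fun _ : nat => Nat.b2n true).
Proof. apply c_const. Qed.

Lemma c_bif (c P Q : nat -> bool) : computable (fun x => Nat.b2n (c x)) -> computable (fun x => Nat.b2n (P x)) ->
  computable (fun x => Nat.b2n (Q x)) -> computable (fun x => Nat.b2n (if c x then P x else Q x)).
Proof.
  intros. eapply c_ext. apply (c_if c (fun x => Nat.b2n (P x)) (fun x => Nat.b2n (Q x))); auto.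
  intro x; cbv beta; destruct (c x); reflexivity.
Qed.

Ltac cauto :=
  match goal with
  | |- computable (fun x => x) => exact c_id
  | |- computable (fun _ => ?n) => exact (c_const n)
  | |- computable (fun x => to_nat (@?a x, @?b x)) => apply (c_pair a b); cauto
  | |- computable (fun x => if @?c x then @?a x else @?b x) => apply (c_if c a b); cauto
  | |- computable (fun x => Nat.b2n (if @?c x then @?P x else @?Q x)) => apply (c_bif c P Q); cauto
  | |- computable (fun x => Nat.b2n (@?P x && @?Q x)) => apply (c_andb P Q); cauto
  | |- computable (fun x => Nat.b2n (@?P x || @?Q x)) => apply (c_orb P Q); cauto
  | |- computable (fun x => Nat.b2n (negb (@?P x))) => apply (c_negb P); cauto
  | |- computable (fun x => Nat.b2n (?F (@?a x) (@?b x))) => apply (c_bapp2 F a b); cauto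
  | |- computable (fun x => Nat.b2n (?F (@?a x))) => apply (c_bapp1 F a); cauto
  | |- computable (fun x => ?F (@?a x) (@?b x) (@?c x)) => apply (c_app3 F a b c); cauto
  | |- computable (fun x => ?F (@?a x) (@?b x)) => apply (c_app2 F a b); cauto
  | |- computable (fun x => ?F (@?a x)) => apply (c_app1 F a); cauto
  | |- computable ?f => exact (c1 (f:=f))
  end.

Lemma mkC2 F f g : computable f -> computable g ->
  (forall x, F x 0 = f x) -> (forall x n, F x (S n) = g (to_nat (x, to_nat (n, F x n)))) -> C2 F.
Proof. intros; unfold C2; eapply (c_prec F f g); eauto. Qed.

Instance C2_add : C2 Nat.add.
Proof. apply (mkC2 _ (fun x => x) (fun z => S (p2 (p2 z)))); [cauto|cauto|intros; lia|].
  intros; rewrite !p2_to; lia. Qed.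


Open Scope nat_scope.

Lemma mkC1 (F : nat -> nat) a g : computable g -> F 0 = a -> (forall n, F (S n) = g (to_nat (n, F n))) -> C1 F.
Proof.
  intros cg H0 HS. assert (Hg : C1 g) by exact cg.
  assert (computable (fun z => (fun (x n : nat) => F n) (p1 z) (p2 z))).
  { apply (c_prec (fun x n => F n) (fun _ => a) (fun z => g (p2 z))). apply c_const.
    cauto. auto. intros; cbv beta; rewrite p2_to; auto. }
  unfold C1. eapply c_ext. apply (c_comp _ (fun n => to_nat (0,n)) H). cauto.
  intro; cbv beta; rewrite p2_to; auto.
Qed.

Instance C1_pred : C1 pred.
Proof. apply (mkC1 _ 0 p1); [cauto|auto|intros; rewrite p1_to; auto]. Qed.
Instance C2_sub : C2 Nat.sub.
Proof. apply (mkC2 _ (fun x => x) (fun z => pred (p2 (p2 z)))); [cauto|cauto|intros; lia|].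
  intros; rewrite !p2_to; lia. Qed.
Instance C2_mul : C2 Nat.mul.
Proof. apply (mkC2 _ (fun x => 0) (fun z => p2 (p2 z) + p1 z)); [cauto|cauto|intros; lia|].
  intros; rewrite !p2_to, p1_to; lia. Qed.

Lemma mkB2 F G : C2 G -> (forall a b, Nat.b2n (F a b) = G a b) -> B2 F.
Proof. intros. unfold B2. eapply c_ext. apply H. intros; cbv beta; rewrite H0; auto. Qed.
Lemma mkB1 F G : C1 G -> (forall a, Nat.b2n (F a) = G a) -> B1 F.
Proof. intros. unfold B1. eapply c_ext. apply H. intros; cbv beta; rewrite H0; auto. Qed.

Instance B2_eqb : B2 Nat.eqb.
Proof. apply (mkB2 _ (fun a b => ifz ((a - b) + (b - a)) 0 1)).
  unfold C2; cauto. intros a b; destruct (Nat.eqb_spec a b);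
  destruct (a - b + (b - a)) eqn:E; cbn [ifz Nat.b2n]; lia. Qed.
Instance B2_leb : B2 Nat.leb.
Proof. apply (mkB2 _ (fun a b => ifz (a - b) 0 1)).
  unfold C2; cauto. intros a b; destruct (Nat.leb_spec a b);
  destruct (a - b) eqn:E; cbn [ifz Nat.b2n]; lia. Qed.
Instance B2_ltb : B2 Nat.ltb.
Proof. apply (mkB2 _ (fun a b => ifz (S a - b) 0 1)).
  unfold C2; cauto. intros a b; destruct (Nat.ltb_spec a b);
  destruct (S a - b) eqn:E; cbn [ifz Nat.b2n]; lia. Qed.
Instance B1_odd : B1 Nat.odd.
Proof. apply (mkB1 _ (fun a => Nat.b2n (Nat.odd a))); [|auto].
  apply (mkC1 _ 0 (fun z => ifz (p2 z) 0 1)); [cauto|auto|].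
  intros n; rewrite p2_to, Nat.odd_succ, <- Nat.negb_odd; destruct (Nat.odd n); auto. Qed.
Instance C1_div2 : C1 Nat.div2.
Proof. apply (mkC1 _ 0 (fun z => p2 z + Nat.b2n (Nat.odd (p1 z)))); [cauto|auto|].
  intros n; rewrite p2_to, p1_to.
  pose proof (Nat.div2_odd n). pose proof (Nat.div2_odd (S n)).
  rewrite Nat.odd_succ, <- Nat.negb_odd in H0. destruct (Nat.odd n); simpl in *; lia. Qed.
Definition itd2 a n := Nat.iter n Nat.div2 a.
Instance C2_iterdiv2 : C2 itd2.
Proof. apply (mkC2 _ (fun x => x) (fun z => Nat.div2 (p2 (p2 z)))); [cauto|cauto|auto|].
  intros; rewrite !p2_to; reflexivity. Qed.
Lemma testbit_iter a n : Nat.testbit a n = Nat.odd (Nat.iter n Nat.div2 a).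
Proof. revert a; induction n; intros; simpl; auto. rewrite IHn. f_equal.
  rewrite Nat.iter_swap; reflexivity. Qed.
Instance B2_testbit : B2 Nat.testbit.
Proof. apply (mkB2 _ (fun a n => Nat.b2n (Nat.odd (itd2 a n)))).
  unfold C2; cauto. intros; rewrite testbit_iter; auto. Qed.
Instance C1_pow2 : C1 (fun n => 2 ^ n).
Proof. apply (mkC1 _ 1 (fun z => p2 z + p2 z)); [cauto|auto|]. intros; rewrite p2_to; simpl; lia. Qed.

Fixpoint Dv (x y n : nat) : nat := match n with 0 => 0 | S m => if S m * y <=? x then S m else Dv x y m end.
Lemma Dv_spec x y n : y <> 0 -> Dv x y n = Nat.min n (x / y).
Proof.
  intros Hy; induction n; cbn [Dv]; auto.
  destruct (Nat.leb_spec (S n * y) x).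
  - assert (S n <= x / y) by (apply Nat.div_le_lower_bound; nia). lia.
  - assert (x / y <= n).
    { destruct (Nat.le_gt_cases (x / y) n); auto.
      exfalso. assert (S n * y <= (x / y) * y) by (apply Nat.mul_le_mono_r; lia).
      pose proof (Nat.Div0.mul_div_le x y). nia. }
    lia.
Qed.
Instance C3_Dv : C3 Dv.
Proof.
  assert (C2 (fun w n => Dv (p1 w) (p2 w) n)).
  { apply (mkC2 _ (fun _ => 0) (fun z => if S (p1 (p2 z)) * p2 (p1 z) <=? p1 (p1 z) then S (p1 (p2 z)) else p2 (p2 z)));
      [cauto|cauto|auto|]. intros; rewrite !p2_to, !p1_to; reflexivity. }
  unfold C3. eapply c_ext. apply (c_app2 _ (fun z => to_nat (p1 z, p1 (p2 z))) (fun z => p2 (p2 z))); cauto.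
  intros; cbv beta; rewrite p1_to, p2_to; auto.
Qed.
Instance C2_div : C2 Nat.div.
Proof. unfold C2. eapply c_ext. apply (c_if (fun x => Nat.eqb (p2 x) 0) (fun _ => 0) (fun x => Dv (p1 x) (p2 x) (p1 x))); cauto.
  intros x; cbv beta. destruct (p2 x) eqn:E. simpl. destruct (p1 x); reflexivity.
  rewrite Dv_spec by lia. cbn [Nat.eqb]. assert (p1 x / S n <= p1 x) by (apply Nat.Div0.div_le_upper_bound; nia). lia. Qed.

Fixpoint bex (P : nat -> nat -> bool) x n : bool := match n with 0 => false | S m => bex P x m || P x m end.
Fixpoint ball (P : nat -> nat -> bool) x n : bool := match n with 0 => true | S m => ball P x m && P x m end.
Fixpoint bfind (P : nat -> nat -> bool) x n : nat :=
  match n with 0 => 0 | S m => match bfind P x m with 0 => if P x m then S m else 0 | r => r end end.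

Lemma B2_bex P `{B2 P} : B2 (bex P).
Proof. apply (mkB2 _ (fun x n => Nat.b2n (bex P x n))); [|auto].
  apply (mkC2 _ (fun _ => 0) (fun z => Nat.b2n (negb (Nat.eqb (p2 (p2 z)) 0) || P (p1 z) (p1 (p2 z))))); [cauto|cauto|auto|].
  intros; rewrite !p2_to, !p1_to. simpl. destruct (bex P x n); reflexivity. Qed.
Lemma B2_ball P `{B2 P} : B2 (ball P).
Proof. apply (mkB2 _ (fun x n => Nat.b2n (ball P x n))); [|auto].
  apply (mkC2 _ (fun _ => 1) (fun z => Nat.b2n (negb (Nat.eqb (p2 (p2 z)) 0) && P (p1 z) (p1 (p2 z))))); [cauto|cauto|auto|].
  intros; rewrite !p2_to, !p1_to. simpl. destruct (ball P x n); reflexivity. Qed.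
Lemma C2_bfind P `{B2 P} : C2 (bfind P).
Proof.
  apply (mkC2 _ (fun _ => 0) (fun z => if Nat.eqb (p2 (p2 z)) 0 then (if P (p1 z) (p1 (p2 z)) then S (p1 (p2 z)) else 0) else p2 (p2 z))); [cauto|cauto|auto|].
  intros; rewrite !p2_to, !p1_to. simpl. destruct (bfind P x n); reflexivity. Qed.

Lemma bex_spec P x n : bex P x n = true <-> exists k, k < n /\ P x k = true.
Proof. induction n; simpl. split; [discriminate|intros [k [? _]]; lia].
  rewrite orb_true_iff, IHn. split.
  - intros [[k [? ?]]|?]; eauto.
  - intros [k [? ?]]. destruct (Nat.eq_dec k n). subst; auto. left; exists k; split; auto; lia. Qed.
Lemma ball_spec P x n : ball P x n = true <-> forall k, k < n -> P x k = true.
Proof. induction n; simpl. split; auto; intros; lia.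
  rewrite andb_true_iff, IHn. split.
  - intros [H1 H2] k Hk. destruct (Nat.eq_dec k n). subst; auto. apply H1; lia.
  - intros H; split; auto. Qed.
Lemma bfind_some P x n y : bfind P x n = S y -> y < n /\ P x y = true.
Proof. induction n; simpl. discriminate.
  destruct (bfind P x n) eqn:E. destruct (P x n) eqn:E2; intros H; inversion H; subst; auto.
  intros H; rewrite <- H in IHn. destruct IHn; auto. Qed.
Lemma bfind_none P x n y : bfind P x n = 0 -> y < n -> P x y = false.
Proof. induction n; simpl. lia.
  destruct (bfind P x n) eqn:E. destruct (P x n) eqn:E2; intros H Hy. discriminate.
  destruct (Nat.eq_dec y n); subst; auto. apply IHn; auto; lia. discriminate. Qed.
Existing Instance B2_bex.
Existing Instance B2_ball.
Existing Instance C2_bfind.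


Open Scope nat_scope.

Fixpoint enc (c : rec_code) : nat :=
  match c with
  | RZero => to_nat (0,0) | RSucc => to_nat (1,0) | RId => to_nat (2,0)
  | RFst => to_nat (3,0) | RSnd => to_nat (4,0)
  | RPair f g => to_nat (5, to_nat (enc f, enc g))
  | RComp f g => to_nat (6, to_nat (enc f, enc g))
  | RPrimRec f g => to_nat (7, to_nat (enc f, enc g))
  | RMin f => to_nat (8, enc f)
  end.

Definition idx (e x y : nat) := to_nat (e, to_nat (x, y)).
Definition mem B e x y := Nat.testbit B (idx e x y).

(* w = (B, f, g, x, y) ; comp: exists z, g x z /\ f z y *)
Definition P6 (w z : nat) : bool :=
  Nat.testbit (p1 w) (to_nat (p1 (p2 (p2 w)), to_nat (p1 (p2 (p2 (p2 w))), z))) &&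
  Nat.testbit (p1 w) (to_nat (p1 (p2 w), to_nat (z, p2 (p2 (p2 (p2 w)))))).
(* w = (B, e, g, x0, m, y) ; primrec succ: exists r, e (x0,m) r /\ g (x0,(m,r)) y *)
Definition P7 (w r : nat) : bool :=
  let B := p1 w in let e := p1 (p2 w) in let g := p1 (p2 (p2 w)) in
  let x0 := p1 (p2 (p2 (p2 w))) in let m := p1 (p2 (p2 (p2 (p2 w)))) in
  let y := p2 (p2 (p2 (p2 (p2 w)))) in
  Nat.testbit B (to_nat (e, to_nat (to_nat (x0, m), r))) &&
  Nat.testbit B (to_nat (g, to_nat (to_nat (x0, to_nat (m, r)), y))).
(* u = ((B, f, x, s), m), v : f (x,m) (S v) *)
Definition R8 (u v : nat) : bool :=
  Nat.testbit (p1 (p1 u)) (to_nat (p1 (p2 (p1 u)), to_nat (to_nat (p1 (p2 (p2 (p1 u))), p2 u), S v))).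
Definition Q8 (w m : nat) : bool := bex R8 (to_nat (w, m)) (p2 (p2 (p2 w))).

Instance B2_P6 : B2 P6.
Proof. unfold B2, P6. cauto. Qed.
Instance B2_P7 : B2 P7.
Proof. unfold B2, P7. cbv zeta. cauto. Qed.
Instance B2_R8 : B2 R8.
Proof. unfold B2, R8. cauto. Qed.
Instance B2_bexR8 : B2 (bex R8) := B2_bex R8.
Instance B2_Q8 : B2 Q8.
Proof. unfold B2, Q8. cauto. Qed.
Instance B2_ballQ8 : B2 (ball Q8) := B2_ball Q8.

Definition rule (w j : nat) : bool :=
  let s := p1 w in let B := p2 w in
  let e := p1 j in let x := p1 (p2 j) in let y := p2 (p2 j) in
  let t := p1 e in let r := p2 e in
  if t =? 0 then y =? 0
  else if t =? 1 then y =? S x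
  else if t =? 2 then y =? x
  else if t =? 3 then y =? p1 x
  else if t =? 4 then y =? p2 x
  else if t =? 5 then Nat.testbit B (to_nat (p1 r, to_nat (x, p1 y))) && Nat.testbit B (to_nat (p2 r, to_nat (x, p2 y)))
  else if t =? 6 then bex P6 (to_nat (B, to_nat (p1 r, to_nat (p2 r, to_nat (x, y))))) s
  else if t =? 7 then
    (if p2 x =? 0 then Nat.testbit B (to_nat (p1 r, to_nat (p1 x, y)))
     else bex P7 (to_nat (B, to_nat (e, to_nat (p2 r, to_nat (p1 x, to_nat (pred (p2 x), y)))))) s)
  else if t =? 8 then Nat.testbit B (to_nat (r, to_nat (to_nat (x, y), 0))) &&
                      ball Q8 (to_nat (B, to_nat (r, to_nat (x, s)))) y
  else false.

Instance B2_rule : B2 rule.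
Proof. unfold B2, rule. cbv zeta. cauto. Qed.

Definition setb (a j : nat) : nat := if Nat.testbit a j then a else a + 2 ^ j.

Fixpoint stepf (w n : nat) : nat :=
  match n with 0 => p2 w | S j => if rule w j then setb (stepf w j) j else stepf w j end.

Instance C2_stepf : C2 stepf.
Proof. apply (mkC2 _ p2 (fun z => if rule (p1 z) (p1 (p2 z)) then
     (if Nat.testbit (p2 (p2 z)) (p1 (p2 z)) then p2 (p2 z) else p2 (p2 z) + (fun n => 2 ^ n) (p1 (p2 z))) else p2 (p2 z)));
  [cauto|cauto|auto|]. intros; rewrite !p2_to, !p1_to. reflexivity. Qed.

Fixpoint Bs (s : nat) : nat := match s with 0 => 0 | S s' => stepf (to_nat (s', Bs s')) s' end.
Instance C1_Bs : C1 Bs.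
Proof. apply (mkC1 _ 0 (fun z => stepf z (p1 z))); [cauto|auto|]. intros; rewrite p1_to; reflexivity. Qed.

(* u = ((e,x), B) *)
Definition Pf (u y : nat) : bool := Nat.testbit (p2 u) (to_nat (p1 (p1 u), to_nat (p2 (p1 u), y))).
Instance B2_Pf : B2 Pf.
Proof. unfold B2, Pf; cauto. Qed.

(* w = (e, x) *)
Fixpoint Hs (w s : nat) : nat :=
  match s with 0 => 0
  | S s' => if Hs w s' =? 0 then bfind Pf (to_nat (w, Bs (S s'))) (S s') else Hs w s' end.
Instance C2_Hs : C2 Hs.
Proof. apply (mkC2 _ (fun _ => 0) (fun z => if p2 (p2 z) =? 0 then bfind Pf (to_nat (p1 z, Bs (S (p1 (p2 z))))) (S (p1 (p2 z))) else p2 (p2 z)));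
  [cauto|cauto|auto|]. intros; rewrite !p2_to, !p1_to. reflexivity. Qed.


Open Scope nat_scope.

Ltac sp H := repeat first [rewrite p1_to in H | rewrite p2_to in H].
Ltac spg := repeat first [rewrite p1_to | rewrite p2_to].

Lemma setb_spec a j i : Nat.testbit (setb a j) i = Nat.testbit a i || (j =? i).
Proof.
  unfold setb. destruct (Nat.testbit a j) eqn:E.
  - destruct (Nat.eqb_spec j i); subst; [rewrite E|]; rewrite ?orb_false_r; auto.
  - assert (Nat.land a (2 ^ j) = 0).
    { apply Nat.bits_inj. intro n. rewrite Nat.land_spec, Nat.bits_0, Nat.pow2_bits_eqb.
      destruct (Nat.eqb_spec j n); subst; [rewrite E|]; auto using andb_false_r. }
    rewrite Nat.add_nocarry_lxor by auto. rewrite Nat.lxor_spec, Nat.pow2_bits_eqb.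
    destruct (Nat.eqb_spec j i); subst; [rewrite E|]; destruct (Nat.testbit a i); auto.
Qed.

Lemma stepf_spec w n i : Nat.testbit (stepf w n) i = Nat.testbit (p2 w) i || ((i <? n) && rule w i).
Proof.
  induction n; simpl. rewrite orb_false_r; auto.
  destruct (rule w n) eqn:R; rewrite ?setb_spec, IHn.
  - destruct (Nat.ltb_spec i n), (Nat.ltb_spec i (S n)), (Nat.eqb_spec n i); subst; simpl; rewrite ?R, ?orb_true_r; auto; try lia.
    all: rewrite ?orb_false_r; auto.

  - destruct (Nat.ltb_spec i n), (Nat.ltb_spec i (S n)); simpl; auto; try lia.
    assert (i = n) by lia; subst; rewrite R; auto.
Qed.

Lemma Bs_S s i : Nat.testbit (Bs (S s)) i = Nat.testbit (Bs s) i || ((i <? s) && rule (to_nat (s, Bs s)) i).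
Proof. cbn [Bs]. rewrite stepf_spec, p2_to. auto. Qed.

Lemma Bs_mono s s' i : s <= s' -> Nat.testbit (Bs s) i = true -> Nat.testbit (Bs s') i = true.
Proof. induction 1; auto. intros; rewrite Bs_S, IHle; auto. Qed.


Lemma sound s : forall j, Nat.testbit (Bs s) j = true -> forall c, p1 j = enc c -> rec_eval c (p1 (p2 j)) (p2 (p2 j)).
Proof.
  induction s. intros; cbn [Bs] in H; rewrite Nat.bits_0 in H; discriminate.
  intros j Hj c Hc. rewrite Bs_S in Hj. apply orb_true_iff in Hj. destruct Hj as [Hj|Hj]; [eauto|].
  apply andb_true_iff in Hj; destruct Hj as [_ Hj]. unfold rule in Hj. rewrite p1_to, p2_to in Hj.
  rewrite Hc in Hj.
  set (x := p1 (p2 j)) in *. set (y := p2 (p2 j)) in *. clearbody x y.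
  assert (IH : forall e x y, mem (Bs s) e x y = true -> forall c, e = enc c -> rec_eval c x y).
  { intros e x' y' H c' He. pose proof (IHs _ H c'). unfold idx in H0. rewrite p1_to, p2_to, p1_to, p2_to in H0. auto. }
  unfold mem, idx in IH.
  destruct c; cbn [enc] in Hj; repeat first [rewrite p1_to in Hj | rewrite p2_to in Hj]; cbn [Nat.eqb] in Hj.
  - apply Nat.eqb_eq in Hj; subst; constructor.
  - apply Nat.eqb_eq in Hj; subst; constructor.
  - apply Nat.eqb_eq in Hj; subst; constructor.
  - apply Nat.eqb_eq in Hj; subst; constructor.
  - apply Nat.eqb_eq in Hj; subst. constructor.
  - apply andb_true_iff in Hj; destruct Hj as [H1 H2].
    rewrite <- (to_p y). constructor; eapply IH; eauto.
  - apply bex_spec in Hj. destruct Hj as [z [_ Hz]]. unfold P6 in Hz.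
    sp Hz. apply andb_true_iff in Hz; destruct Hz as [H1 H2].
    econstructor; eapply IH; eauto.
  - destruct (p2 x) eqn:E; cbn [Nat.eqb pred] in Hj.
    + rewrite <- (to_p x), E. constructor. eapply IH; eauto.
    + apply bex_spec in Hj. destruct Hj as [r [_ Hr]]. unfold P7 in Hr.
      sp Hr. cbn [pred] in Hr. apply andb_true_iff in Hr; destruct Hr as [H1 H2].
      rewrite <- (to_p x), E. econstructor.
      * eapply IH. apply H1. reflexivity.
      * eapply IH; eauto.
  - apply andb_true_iff in Hj; destruct Hj as [H1 H2].
    constructor. eapply IH; eauto.
    intros m Hm. rewrite ball_spec in H2. specialize (H2 m Hm). unfold Q8 in H2.
    sp H2. apply bex_spec in H2. destruct H2 as [v [_ Hv]]. unfold R8 in Hv.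
    sp Hv. exists v. eapply IH; eauto.
Qed.


Open Scope nat_scope.

Definition inv_P c x y : Prop := match c with
| RZero => y = 0 | RSucc => y = S x | RId => y = x | RFst => y = fst (of_nat x) | RSnd => y = snd (of_nat x)
| RPair f g => exists a b, y = to_nat (a,b) /\ rec_eval f x a /\ rec_eval g x b
| RComp f g => exists z, rec_eval g x z /\ rec_eval f z y
| RPrimRec f g => (exists x0, x = to_nat (x0,0) /\ rec_eval f x0 y) \/
    (exists x0 n r, x = to_nat (x0,S n) /\ rec_eval (RPrimRec f g) (to_nat (x0,n)) r /\ rec_eval g (to_nat (x0, to_nat (n,r))) y)
| RMin f => rec_eval f (to_nat (x,y)) 0 /\ forall m, m < y -> exists v, rec_eval f (to_nat (x,m)) (S v)
end.
Lemma inv c x y : rec_eval c x y -> inv_P c x y.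
Proof. destruct 1; simpl; eauto 10. Qed.

Lemma det : forall c x y, rec_eval c x y -> forall y', rec_eval c x y' -> y = y'.
Proof.
  fix IH 4. intros c x y H; destruct H; intros y' H'; apply inv in H'; cbn [inv_P] in H'.
  - auto.
  - auto.
  - auto.
  - auto.
  - auto.
  - destruct H' as [a' [b' [E [Ha Hb]]]]; subst.
    rewrite (IH _ _ _ H _ Ha), (IH _ _ _ H0 _ Hb); auto.
  - destruct H' as [z' [H1 H2]]. pose proof (IH _ _ _ H _ H1); subst. eapply IH; eauto.
  - destruct H' as [[x0 [E H1]]|[x0 [n [r' [E _]]]]].
    + apply to_nat_inj in E; injection E; intros; subst. eapply IH; eauto.
    + apply to_nat_inj in E; discriminate.
  - destruct H' as [[x0 [E H1]]|[x0 [n' [r'' [E [H1 H2]]]]]].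
    + apply to_nat_inj in E; discriminate.
    + apply to_nat_inj in E; injection E; intros; subst.
      pose proof (IH _ _ _ H _ H1); subst. eapply IH; eauto.
  - destruct H' as [H1 H2].
    destruct (Nat.lt_trichotomy n y') as [Hl|[Hl|Hl]]; auto.
    + destruct (H2 n Hl) as [v Hv]. pose proof (IH _ _ _ H _ Hv). discriminate.
    + destruct (H0 y' Hl) as [v Hv]. pose proof (IH _ _ _ Hv _ H1). discriminate.
Qed.


Open Scope nat_scope.

Definition EV (j : nat) := exists s0, forall s, s0 <= s -> Nat.testbit (Bs s) j = true.

Lemma fire j s : j < s -> rule (to_nat (s, Bs s)) j = true -> EV j.
Proof.
  intros Hj Hr. exists (S s). intros s' Hs. apply (Bs_mono (S s)); auto.
  rewrite Bs_S. apply Nat.ltb_lt in Hj. rewrite Hj, Hr. apply orb_true_r.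
Qed.

Lemma unif n (P : nat -> nat -> Prop) : (forall m, m < n -> exists K, forall s, K <= s -> P m s) ->
  exists K, forall m s, m < n -> K <= s -> P m s.
Proof.
  induction n; intros H. exists 0; intros; lia.
  destruct IHn as [K1 HK1]. intros; apply H; lia.
  destruct (H n) as [K2 HK2]. lia.
  exists (Nat.max K1 K2). intros m s Hm Hs. destruct (Nat.eq_dec m n). subst; apply HK2; lia.
  apply HK1; lia.
Qed.


Lemma complete : forall c x y, rec_eval c x y -> EV (idx (enc c) x y).
Proof.
  fix IH 4. intros c x y H; destruct H.
  all: unfold EV.
  - apply (fire _ (S (idx (enc RZero) x 0))); [lia|]. unfold rule; unfold idx; cbn [enc]; spg. reflexivity.
  - apply (fire _ (S (idx (enc RSucc) x (S x)))); [lia|]. unfold rule; unfold idx; cbn [enc]; spg. cbn [Nat.eqb]. apply Nat.eqb_refl.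
  - apply (fire _ (S (idx (enc RId) x x))); [lia|]. unfold rule; unfold idx; cbn [enc]; spg. cbn [Nat.eqb]. apply Nat.eqb_refl.
  - apply (fire _ (S (idx (enc RFst) n (fst (of_nat n))))); [lia|]. unfold rule; unfold idx; cbn [enc]; spg. cbn [Nat.eqb]. apply Nat.eqb_refl.
  - apply (fire _ (S (idx (enc RSnd) n (snd (of_nat n))))); [lia|]. unfold rule; unfold idx; cbn [enc]; spg. cbn [Nat.eqb]. apply Nat.eqb_refl.
  - destruct (IH _ _ _ H) as [s1 H1]. destruct (IH _ _ _ H0) as [s2 H2].
    set (j := idx (enc (RPair f g)) x (to_nat (a, b))).
    apply (fire _ (S (Nat.max j (Nat.max s1 s2)))); [lia|]. unfold rule; unfold j, idx; cbn [enc]; spg. cbn [Nat.eqb].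
    rewrite H1, H2 by lia. reflexivity.
  - destruct (IH _ _ _ H) as [s1 H1]. destruct (IH _ _ _ H0) as [s2 H2].
    set (j := idx (enc (RComp f g)) x z).
    apply (fire _ (S (Nat.max (Nat.max j y) (Nat.max s1 s2)))); [lia|]. unfold rule; unfold j, idx; cbn [enc]; spg. cbn [Nat.eqb].
    apply bex_spec. exists y. split; [lia|]. unfold P6; spg. unfold idx in H1, H2. rewrite H1, H2 by lia. reflexivity.
  - destruct (IH _ _ _ H) as [s1 H1].
    set (j := idx (enc (RPrimRec f g)) (to_nat (x, 0)) r).
    apply (fire _ (S (Nat.max j s1))); [lia|]. unfold rule; unfold j, idx; cbn [enc]; spg. cbn [Nat.eqb].
    unfold idx in H1. rewrite H1 by lia. reflexivity.
  - destruct (IH _ _ _ H) as [s1 H1]. destruct (IH _ _ _ H0) as [s2 H2].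
    set (j := idx (enc (RPrimRec f g)) (to_nat (x, S n)) r').
    apply (fire _ (S (Nat.max (Nat.max j r) (Nat.max s1 s2)))); [lia|]. unfold rule; unfold j, idx; cbn [enc]; spg. cbn [Nat.eqb pred].
    apply bex_spec. exists r. split; [lia|]. unfold P7; spg. unfold idx in H1, H2. cbn [enc] in H1.
    rewrite H1, H2 by lia. reflexivity.
  - destruct (IH _ _ _ H) as [s1 H1].
    assert (U : exists K, forall m s, m < n -> K <= s ->
       exists v, v < s /\ Nat.testbit (Bs s) (idx (enc f) (to_nat (x, m)) (S v)) = true).
    { apply unif. intros m Hm. destruct (H0 m Hm) as [v Hv]. destruct (IH _ _ _ Hv) as [s2 H2].
      exists (Nat.max s2 (S v)). intros s Hs. exists v. split; [lia|]. apply H2; lia. }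
    destruct U as [K HK].
    set (j := idx (enc (RMin f)) x n).
    apply (fire _ (S (Nat.max j (Nat.max s1 K)))); [lia|]. unfold rule; unfold j, idx; cbn [enc]; spg. cbn [Nat.eqb].
    unfold idx in H1. rewrite H1 by lia. cbn [andb].
    apply ball_spec. intros m Hm. unfold Q8. spg. apply bex_spec.
    destruct (HK m (S (Nat.max j (Nat.max s1 K))) Hm) as [v [Hv1 Hv2]]. lia.
    exists v. spg. split; auto. unfold R8. spg. unfold idx in Hv2. exact Hv2.
Qed.


Open Scope nat_scope.

Lemma Hs_sound w s y : Hs w s = S y -> exists s', Nat.testbit (Bs s') (idx (p1 w) (p2 w) y) = true.
Proof.
  induction s; cbn [Hs]. discriminate.
  destruct (Hs w s =? 0) eqn:E; auto.
  intros Hb. apply bfind_some in Hb. destruct Hb as [_ Hb]. unfold Pf in Hb. sp Hb.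
  exists (S s). exact Hb.
Qed.

Lemma Hs_stable w s s' : s <= s' -> Hs w s <> 0 -> Hs w s' = Hs w s.
Proof.
  induction 1; auto. intros Hn. cbn [Hs]. rewrite IHle by auto.
  destruct (Nat.eqb_spec (Hs w s) 0); [contradiction|auto].
Qed.

Lemma Hs_found w s y : y < s -> Nat.testbit (Bs s) (idx (p1 w) (p2 w) y) = true -> Hs w s <> 0.
Proof.
  destruct s as [|s]. lia. intros Hy Hb. cbn [Hs].
  destruct (Nat.eqb_spec (Hs w s) 0); auto.
  destruct (bfind Pf (to_nat (w, Bs (S s))) (S s)) eqn:E; [|discriminate].
  assert (Pf (to_nat (w, Bs (S s))) y = false) by (eapply bfind_none; eauto).
  unfold Pf in H. sp H. unfold idx in Hb. rewrite Hb in H. discriminate.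
Qed.

Lemma Hs_correct c x y : rec_eval c x y -> exists s0, forall s, s0 <= s -> Hs (to_nat (enc c, x)) s = S y.
Proof.
  intros H. destruct (complete _ _ _ H) as [s0 H0].
  set (w := to_nat (enc c, x)).
  set (s1 := Nat.max s0 (S y)).
  assert (N : Hs w s1 <> 0). { apply (Hs_found w s1 y). lia. unfold w; spg. apply H0; lia. }
  destruct (Hs w s1) as [|y'] eqn:E; [contradiction|].
  destruct (Hs_sound _ _ _ E) as [s' Hs']. unfold w in Hs'; sp Hs'.
  pose proof (sound _ _ Hs' c) as R. unfold idx in R. sp R. specialize (R eq_refl).
  pose proof (det _ _ _ H _ R). subst y'.
  exists s1. intros s Hs. rewrite (Hs_stable w s1 s); auto. rewrite E; discriminate.
Qed.


Open Scope nat_scope.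

Definition Lfl (n : nat) : nat := if p1 (p1 n) =? 0 then p2 (p1 n) / S (p2 n) else 0.
Instance C1_Lfl : C1 Lfl.
Proof. unfold C1, Lfl. cauto. Qed.

Definition cn (m : nat) : nat := to_nat (to_nat (0, m), 0).

Lemma qR_val n : qR n = ((if p1 (p1 n) =? 0 then INR (p2 (p1 n)) else - INR (p2 (p1 n))) / INR (S (p2 n)))%R.
Proof.
  unfold qR, qdec, p1, p2, zdec. destruct (of_nat n) as [a b]. cbn [fst snd].
  destruct (of_nat a) as [s m]. cbn [fst snd]. unfold Q2R. cbn [Qnum Qden].
  rewrite Zpos_P_of_succ_nat, <- Nat2Z.inj_succ, <- INR_IZR_INZ.
  destruct s; cbn [Nat.eqb]. rewrite <- INR_IZR_INZ; reflexivity.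
  rewrite opp_IZR, <- INR_IZR_INZ; reflexivity.
Qed.

Lemma qR_cn m : qR (cn m) = INR m.
Proof. rewrite qR_val. unfold cn. repeat first [rewrite p1_to | rewrite p2_to]. cbn [Nat.eqb]. rewrite INR_1. field. Qed.

Lemma Lfl_bounds n : (INR (Lfl n) <= Rmax 0 (qR n) /\ qR n < INR (Lfl n) + 1)%R.
Proof.
  rewrite qR_val. unfold Lfl. set (m := p2 (p1 n)). set (b := p2 n).
  assert (Hb : (0 < INR (S b))%R) by (apply lt_0_INR; lia).
  destruct (p1 (p1 n) =? 0).
  - pose proof (Nat.div_mod m (S b) ltac:(lia)). pose proof (Nat.mod_upper_bound m (S b) ltac:(lia)).
    set (qq := m / S b) in *. set (rr := m mod S b) in *.
    assert (E : INR m = (INR (S b) * INR qq + INR rr)%R) by (rewrite H; rewrite plus_INR, mult_INR; auto).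
    assert (Hr : (INR rr < INR (S b))%R) by (apply lt_INR; lia).
    assert (Hr0 : (0 <= INR rr)%R) by apply pos_INR.
    split.
    + apply Rle_trans with (INR m / INR (S b))%R; [|apply Rmax_r].
      apply Rmult_le_reg_r with (INR (S b)); auto. unfold Rdiv. rewrite Rmult_assoc, Rinv_l by lra. lra.
    + apply Rmult_lt_reg_r with (INR (S b)); auto. unfold Rdiv. rewrite Rmult_assoc, Rinv_l by lra. nra.
  - pose proof (pos_INR m). split.
    + rewrite INR_0. apply Rmax_l.
    + rewrite INR_0. apply Rmult_lt_reg_r with (INR (S b)); auto. unfold Rdiv. rewrite Rmult_assoc, Rinv_l by lra. lra.
Qed.

Lemma Lfl_mono n n' : (qR n <= qR n')%R -> Lfl n <= Lfl n'.
Proof.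
  intros H. destruct (Nat.le_gt_cases (Lfl n) (Lfl n')); auto. exfalso.
  destruct (Lfl_bounds n) as [A _]. destruct (Lfl_bounds n') as [_ B].
  assert (INR (Lfl n') + 1 <= INR (Lfl n))%R by (rewrite <- S_INR; apply le_INR; lia).
  assert (1 <= INR (Lfl n))%R by (rewrite <- INR_1; apply le_INR; lia).
  unfold Rmax in A. destruct (Rle_dec 0 (qR n)); lra.
Qed.

Lemma mono_trans (r : nat -> nat) : (forall s, r s <= r (S s)) -> forall s t, s <= t -> r s <= r t.
Proof. intros H s t Hst; induction Hst; auto. eapply Nat.le_trans; eauto. Qed.

Lemma evconst_aux D : forall r : nat -> nat, (forall s, r s <= r (S s)) -> (forall s, r s <= r 0 + D) ->
  exists N, forall s, N <= s -> r s = r N.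
Proof.
  induction D; intros r Hm Hb.
  - exists 0. intros s _. pose proof (mono_trans r Hm 0 s ltac:(lia)). specialize (Hb s). lia.
  - destruct (classic (forall s, r s = r 0)) as [Hc|Hc].
    + exists 0; intros; auto.
    + apply not_all_ex_not in Hc. destruct Hc as [s Hs].
      pose proof (mono_trans r Hm 0 s ltac:(lia)).
      destruct (IHD (fun t => r (s + t))) as [N HN].
      * intros t; rewrite Nat.add_succ_r; auto.
      * intros t. rewrite Nat.add_0_r. specialize (Hb (s + t)). lia.
      * exists (s + N). intros t Ht. specialize (HN (t - s) ltac:(lia)).
        replace (s + (t - s)) with t in HN by lia. auto.
Qed.

Lemma evconst (r : nat -> nat) K : (forall s, r s <= r (S s)) -> (forall s, r s <= K) ->
  exists N, forall s, N <= s -> r s = r N.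
Proof. intros Hm Hb. apply (evconst_aux K r Hm). intros s; specialize (Hb s); lia. Qed.


Open Scope nat_scope.

Instance C2_max : C2 Nat.max.
Proof. unfold C2. eapply c_ext. apply (c_app2 Nat.add p1 (fun z => p2 z - p1 z)); cauto.
  intros; cbv beta; lia. Qed.

Definition rstage (gM : nat -> nat) (e s : nat) : nat :=
  if (Hs (to_nat (e, to_nat (2*e, 0))) s =? 0) || (Hs (to_nat (e, to_nat (S (2*e), 0))) s =? 0) then 1
  else 4 + Lfl (gM (to_nat (pred (Hs (to_nat (e, to_nat (2*e, 0))) s), to_nat (pred (Hs (to_nat (e, to_nat (S (2*e), 0))) s), s)))).

Definition gA gM z := cn (if p1 z =? p1 (p2 z) then 0 else
   Nat.max (rstage gM (Nat.div2 (p1 z)) (p2 (p2 z))) (rstage gM (Nat.div2 (p1 (p2 z))) (p2 (p2 z)))).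

Lemma gA_comp gM : computable gM -> computable (gA gM).
Proof. intros H. assert (C1 gM) by exact H. unfold gA, rstage, cn. cauto. Qed.

Lemma rstage_ge1 gM e s : 1 <= rstage gM e s.
Proof. unfold rstage. destruct (_ || _); lia. Qed.

Definition GM_mono (gM : nat -> nat) := forall i k s,
  (qR (gM (to_nat (i, to_nat (k, s)))) <= qR (gM (to_nat (i, to_nat (k, S s)))))%R.

Lemma rstage_mono gM (Hm : GM_mono gM) e s : rstage gM e s <= rstage gM e (S s).
Proof.
  unfold rstage at 1.
  destruct (Hs (to_nat (e, to_nat (2*e, 0))) s =? 0) eqn:E1; [cbn [orb]; apply rstage_ge1|].
  destruct (Hs (to_nat (e, to_nat (S (2*e), 0))) s =? 0) eqn:E2; [cbn [orb]; apply rstage_ge1|].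
  apply Nat.eqb_neq in E1, E2. unfold rstage.
  rewrite (Hs_stable _ s (S s) (Nat.le_succ_diag_r s) E1). rewrite (Hs_stable _ s (S s) (Nat.le_succ_diag_r s) E2).
  rewrite (proj2 (Nat.eqb_neq _ _) E1), (proj2 (Nat.eqb_neq _ _) E2). cbn [orb].
  apply le_n_S, le_n_S, le_n_S, le_n_S. apply Lfl_mono. apply Hm.
Qed.

Definition GM_bnd (gM : nat -> nat) := forall i k, exists K, forall s, Lfl (gM (to_nat (i, to_nat (k, s)))) <= K.

Lemma rstage_conv gM (Hm : GM_mono gM) (Hb : GM_bnd gM) e :
  exists N, forall s, N <= s -> rstage gM e s = rstage gM e N.
Proof.
  set (w1 := to_nat (e, to_nat (2*e, 0))). set (w2 := to_nat (e, to_nat (S (2*e), 0))).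
  destruct (classic (exists s1, Hs w1 s1 <> 0 /\ Hs w2 s1 <> 0)) as [[s1 [N1 N2]]|Hn].
  - destruct (Hb (pred (Hs w1 s1)) (pred (Hs w2 s1))) as [K0 HK].
    apply (evconst _ (4 + K0)). apply rstage_mono; auto.
    intros s. apply Nat.le_trans with (rstage gM e (Nat.max s s1)).
    apply mono_trans; [apply rstage_mono; auto|lia].
    unfold rstage. fold w1 w2.
    rewrite (Hs_stable w1 s1 (Nat.max s s1)) by (auto; lia).
    rewrite (Hs_stable w2 s1 (Nat.max s s1)) by (auto; lia).
    rewrite (proj2 (Nat.eqb_neq _ _) N1), (proj2 (Nat.eqb_neq _ _) N2). cbn [orb].
    specialize (HK (Nat.max s s1)). lia.
  - apply (evconst _ 1). apply rstage_mono; auto.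
    intros s. unfold rstage. fold w1 w2.
    destruct (Nat.eqb_spec (Hs w1 s) 0); cbn [orb]; auto.
    destruct (Nat.eqb_spec (Hs w2 s) 0); cbn [orb]; auto.
    exfalso; apply Hn; exists s; auto.
Qed.

Definition rlim gM (Hc : forall e, exists N, forall s, N <= s -> rstage gM e s = rstage gM e N) e : nat :=
  rstage gM e (proj1_sig (constructive_indefinite_description _ (Hc e))).

Lemma rlim_spec gM Hc e : exists N, forall s, N <= s -> rstage gM e s = rlim gM Hc e.
Proof. unfold rlim. destruct (constructive_indefinite_description _ (Hc e)) as [N HN]. exists N; auto. Qed.

Lemma rlim_ge1 gM Hc e : 1 <= rlim gM Hc e.
Proof. unfold rlim; apply rstage_ge1. Qed.

Open Scope R_scope.

Definition dAr (r : nat -> nat) (x y : nat) : R :=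
  if Nat.eqb x y then 0 else INR (Nat.max (r (Nat.div2 x)) (r (Nat.div2 y))).

Lemma INR_max a b : INR (Nat.max a b) = Rmax (INR a) (INR b).
Proof.
  unfold Rmax. destruct (Rle_dec (INR a) (INR b)) as [H|H].
  - apply INR_le in H. rewrite Nat.max_r; auto.
  - assert (b <= a)%nat. { destruct (Nat.le_gt_cases b a); auto. exfalso; apply H; apply le_INR; lia. }
    rewrite Nat.max_l; auto.
Qed.


Lemma dAr_nonneg r x y : 0 <= dAr r x y.
Proof. unfold dAr. destruct (x =? y)%nat; [lra|apply pos_INR]. Qed.

Lemma dAr_pos r (Hr : forall e, (1 <= r e)%nat) x y : x <> y -> 1 <= dAr r x y.
Proof. intros H. unfold dAr. apply Nat.eqb_neq in H; rewrite H. rewrite <- INR_1. apply le_INR.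
  specialize (Hr (Nat.div2 x)). lia. Qed.

Lemma dAr_sym r x y : dAr r x y = dAr r y x.
Proof. unfold dAr. rewrite Nat.eqb_sym. rewrite Nat.max_comm. auto. Qed.

Lemma dAr_refl r x : dAr r x x = 0.
Proof. unfold dAr. rewrite Nat.eqb_refl; auto. Qed.

Lemma dAr_ultra r x y z : dAr r x z <= Rmax (dAr r x y) (dAr r y z).
Proof.
  destruct (Nat.eq_dec x z). subst. rewrite dAr_refl. apply Rle_trans with (dAr r z y); [apply dAr_nonneg|apply Rmax_l].
  destruct (Nat.eq_dec x y). subst. rewrite dAr_refl. apply Rmax_r.
  destruct (Nat.eq_dec y z). subst. rewrite dAr_refl. apply Rmax_l.
  unfold dAr. rewrite (proj2 (Nat.eqb_neq _ _) n), (proj2 (Nat.eqb_neq _ _) n0), (proj2 (Nat.eqb_neq _ _) n1).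
  rewrite <- INR_max. apply le_INR. lia.
Qed.

Lemma name_close {M} (d : M -> M -> R) p g x :
  (forall x y z, d x z <= d x y + d y z) -> cauchy_name_for d p g x -> d (p (g 0%nat)) x <= 1.
Proof.
  intros Htri [Hn Hcv].
  apply Rnot_lt_le; intro H.
  destruct (Hcv (d (p (g 0%nat)) x - 1)) as [N HN]. lra.
  specialize (HN N (le_n N)). pose proof (Hn 0%nat N (Nat.le_0_l N)) as H0. simpl in H0.
  rewrite Rinv_1 in H0.
  pose proof (Htri (p (g 0%nat)) (p (g N)) x). lra.
Qed.

Lemma qR_gA gM i k s : qR (gA gM (to_nat (i, to_nat (k, s)))) =
  INR (if (i =? k)%nat then 0 else Nat.max (rstage gM (Nat.div2 i) s) (rstage gM (Nat.div2 k) s)).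
Proof. unfold gA. rewrite qR_cn. repeat first [rewrite p1_to | rewrite p2_to]. reflexivity. Qed.

Theorem mainTheorem15 :
  forall (M : Type) (d : M -> M -> R) (p : nat -> M),
    left_ce_metric_space d p ->
    exists (A : Type) (dA : A -> A -> R) (q : nat -> A),
      left_ce_metric_space dA q /\ is_ultrametric dA /\
      ~ (exists f : A -> M,
           isometric_embedding dA d f /\ computable_map q d p f).
Proof.
  intros M d p [[Hmet [Hcomp Hdense]] [gM [Hgc Hg]]].
  destruct Hmet as [Hd0 [Hsym Htri]].
  assert (Hm : GM_mono gM) by (intros i k s; apply (proj1 (Hg i k))).
  assert (Hb : GM_bnd gM).
  { intros i k. destruct (INR_archimed 1 (Rmax 0 (d (p i) (p k)))) as [K HK]; [lra|].
    exists K. intros s.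
    destruct (Lfl_bounds (gM (to_nat (i, to_nat (k, s))))) as [A _].
    pose proof (growing_ineq _ _ (proj1 (Hg i k)) (proj2 (Hg i k)) s) as G. cbv beta in G.
    assert (INR (Lfl (gM (to_nat (i, to_nat (k, s))))) < INR K) as H.
    { rewrite Rmult_1_r in HK. unfold Rmax in *.
      destruct (Rle_dec 0 (qR (gM (to_nat (i, to_nat (k, s)))))), (Rle_dec 0 (d (p i) (p k))); lra. }
    apply INR_lt in H; lia. }
  set (Hc := rstage_conv gM Hm Hb).
  set (r := rlim gM Hc).
  assert (Hr : forall e, (1 <= r e)%nat) by (intros; apply rlim_ge1).
  exists nat, (dAr r), (fun k => k).
  split; [|split].
  - split; [split; [|split]|].
    + split; [|split].
      * intros x y; split; intros H.
        destruct (Nat.eq_dec x y); auto. pose proof (dAr_pos r Hr x y n); lra.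
        subst; apply dAr_refl.
      * apply dAr_sym.
      * intros x y z. pose proof (dAr_ultra r x y z). pose proof (dAr_nonneg r x y). pose proof (dAr_nonneg r y z).
        unfold Rmax in H; destruct (Rle_dec (dAr r x y) (dAr r y z)); lra.
    + intros u Hu. destruct (Hu (1/2)) as [N HN]; [lra|].
      exists (u N). intros eps Heps. exists N. intros n Hn.
      specialize (HN n N Hn (le_n N)).
      destruct (Nat.eq_dec (u n) (u N)) as [E|E].
      * rewrite E, dAr_refl; lra.
      * pose proof (dAr_pos r Hr _ _ E); lra.
    + intros x eps Heps. exists x. rewrite dAr_refl. lra.
    + exists (gA gM). split. apply gA_comp; auto.
      intros i k. split.
      * intros s. rewrite !qR_gA. apply le_INR.
        destruct (i =? k)%nat; [lia|].
        pose proof (rstage_mono gM Hm (Nat.div2 i) s). pose proof (rstage_mono gM Hm (Nat.div2 k) s). lia.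
      * destruct (rlim_spec gM Hc (Nat.div2 i)) as [N1 H1].
        destruct (rlim_spec gM Hc (Nat.div2 k)) as [N2 H2].
        intros eps Heps. exists (Nat.max N1 N2). intros n Hn.
        rewrite qR_gA. unfold dAr. rewrite H1, H2 by lia. fold r.
        destruct (i =? k)%nat; unfold Rdist; rewrite ?INR_0, Rminus_diag, Rabs_R0; lra.
  - intros x y z. apply dAr_ultra.
  - intros [f [Hiso [h [[c Hcc] Hname]]]].
    set (e := enc c).
    set (u := h (to_nat (2 * e, 0)%nat)). set (v := h (to_nat (S (2 * e), 0)%nat)).
    destruct (Hs_correct c _ _ (Hcc (to_nat (2 * e, 0)%nat))) as [s1 Hs1].
    destruct (Hs_correct c _ _ (Hcc (to_nat (S (2 * e), 0)%nat))) as [s2 Hs2].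
    destruct (rlim_spec gM Hc e) as [s3 Hs3].
    destruct (proj2 (Hg u v) (1/2)) as [s4 Hs4]; [lra|].
    set (s := Nat.max (Nat.max s1 s2) (Nat.max s3 s4)).
    specialize (Hs1 s ltac:(lia)). specialize (Hs2 s ltac:(lia)). specialize (Hs3 s ltac:(lia)).
    specialize (Hs4 s ltac:(lia)). cbv beta in Hs4.
    unfold rstage in Hs3. fold e in Hs1, Hs2. rewrite Hs1, Hs2 in Hs3. cbn [Nat.eqb orb pred] in Hs3.
    fold u v in Hs1, Hs2.
    destruct (Lfl_bounds (gM (to_nat (u, to_nat (v, s))))) as [_ LB].
    assert (Hiso' := Hiso (2 * e)%nat (S (2 * e))).
    unfold dAr in Hiso'. rewrite (proj2 (Nat.eqb_neq _ _) (ltac:(lia) : (2 * e <> S (2 * e))%nat)) in Hiso'.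
    replace (Nat.div2 (2 * e)) with e in Hiso' by (symmetry; apply Nat.div2_double).
    replace (Nat.div2 (S (2 * e))) with e in Hiso' by (symmetry; apply Nat.div2_succ_double).
    rewrite Nat.max_id in Hiso'. fold r in Hiso', Hs3. rewrite <- Hs3 in Hiso'.
    rewrite plus_INR in Hiso'.
    pose proof (name_close d p _ _ Htri (Hname (2 * e)%nat)) as C1. cbv beta in C1. fold u in C1.
    pose proof (name_close d p _ _ Htri (Hname (S (2 * e)))) as C2. cbv beta in C2. fold v in C2.
    pose proof (Htri (f (2 * e)%nat) (p u) (f (S (2 * e)))).
    pose proof (Htri (p u) (p v) (f (S (2 * e)))).
    rewrite Hsym in C1.
    unfold Rdist in Hs4. apply Rabs_def2 in Hs4.
    replace (INR 4) with 4 in Hiso' by (simpl; lra).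
    fold u v in Hiso'. lra.
Qed.
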